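(* Let $\Delta$ and $\chi$ be integers with $2\le \chi\le \Delta$. If $G$ is a graph with maximum degree $\Delta$ and chromatic number $\chi$, then $$\chi'_{inj}(G)\le (\chi-1)\lceil 27\Delta\ln\Delta\rceil.$$ In particular, if $G$ is bipartite (with maximum degree $\Delta\ge 2$), then $\chi'_{inj}(G)\le \lceil 27\Delta\ln\Delta\rceil$.
   Context: All graphs are finite and simple; $\ln$ is the natural logarithm. An edge coloring of a graph $G$ (not necessarily proper) is \emph{injective} if any two distinct edges $e,f$ receive distinct colors whenever either (i) $e$ and $f$ share no vertex and some edge of $G$ joins an endpoint of $e$ to an endpoint of $f$, or (ii) $e$ and $f$ lie in a common triangle of $G$. The injective chromatic index $\chi'_{inj}(G)$ is the minimum number of colors in an injective edge coloring of $G$. *)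

(* Defs.v *)
From HB Require Import structures.
From mathcomp Require Import all_boot all_order all_algebra.
Set Implicit Arguments. Unset Strict Implicit. Unset Printing Implicit Defensive.

Definition simple_graph (T : finType) (e : rel T) : Prop :=
  symmetric e /\ irreflexive e.

Definition is_edge (T : finType) (e : rel T) (S : {set T}) : bool :=
  [exists x : T, exists y : T, e x y && (S == [set x; y])].

Definition deg (T : finType) (e : rel T) (x : T) : nat := #|[set y | e x y]|.
Definition max_degree (T : finType) (e : rel T) : nat := \max_(x : T) deg e x.

Definition colorable (T : finType) (e : rel T) (k : nat) : bool :=
  [exists f : {ffun T -> 'I_k}, forall x : T, forall y : T, e x y ==> (f x != f y)].
Definition chromatic_number (T : finType) (e : rel T) : nat :=
  find (colorable e) (iota 0 #|T|.+1).

Definition inj_conflict (T : finType) (e : rel T) (e1 e2 : {set T}) : bool :=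
  [&& is_edge e e1, is_edge e e2, e1 != e2 &
   ([disjoint e1 & e2] && [exists u in e1, exists v in e2, e u v])
   || [exists x : T, exists y : T, exists z : T,
        [&& e x y, e y z, e x z, e1 \subset [set x; y; z] & e2 \subset [set x; y; z]]]].

(* injective edge colourings with k colours (colours on non-edges irrelevant);
   injective chromatic index = least such k (a colouring with #|{set T}|
   colours always exists, so the search range suffices). *)
Definition inj_edge_colorable (T : finType) (e : rel T) (k : nat) : bool :=
  [exists c : {ffun {set T} -> 'I_k}, forall e1 : {set T}, forall e2 : {set T},
     inj_conflict e e1 e2 ==> (c e1 != c e2)].
Definition inj_chromatic_index (T : finType) (e : rel T) : nat :=
  find (inj_edge_colorable e) (iota 0 #|{set T}|.+1).

Definition bipartite (T : finType) (e : rel T) : bool := colorable e 2.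

(* Main.v *)
Require Import Defs.
From HB Require Import structures.
From mathcomp Require Import all_boot all_order all_algebra.
From mathcomp Require Import all_classical all_reals all_analysis.
Import Order.TTheory GRing.Theory Num.Theory.
From mathcomp Require Import fintype finset.
From mathcomp Require Import zify ring lra.

Module Part1.
Set Implicit Arguments. Unset Strict Implicit. Unset Printing Implicit Defensive.
Section Count.
Variables (X Y : finType).
Notation Om := {ffun X -> Y}.

Definition dep (A : {set Om}) (D : {set X}) :=
  forall a b : Om, (forall x, x \in D -> a x = b x) -> (a \in A) = (b \in A).

Definition mix (D : {set X}) (a b : Om) : Om :=
  [ffun x => if x \in D then a x else b x].

Definition mixp (D : {set X}) (p : Om * Om) : Om * Om :=
  (mix D p.1 p.2, mix D p.2 p.1).

Lemma mixpK (D : {set X}) : involutive (mixp D).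
Proof.
case=> a b; rewrite /mixp /mix /=; congr pair; apply/ffunP=> x; rewrite !ffunE;
by case: (x \in D).
Qed.

Lemma dep_sub A (D D' : {set X}) : D \subset D' -> dep A D -> dep A D'.
Proof. move=> sD hA a b hab; apply: hA => x xD; apply: hab; move: xD; exact: (subsetP sD). Qed.

Lemma indep (A B : {set Om}) (D : {set X}) : dep A D -> dep B (~: D) ->
  (#|A :&: B| * #|Om| = #|A| * #|B|)%N.
Proof.
move=> hA hB.
have inj : injective (mixp D) := inv_inj (@mixpK D).
set P := setX (A :&: B) [set: Om]; set Q := setX A B.
have h1 : mixp D @: P \subset Q.
  apply/subsetP=> q /imsetP [[a b]]; rewrite !inE /= => /andP [/andP[aA aB] _] ->.
  rewrite /mixp /=; apply/andP; split.
    rewrite (hA _ a) // => x xD; by rewrite /mix ffunE xD.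
  rewrite (hB _ a) // => x; rewrite inE => xD; by rewrite /mix ffunE (negbTE xD).
have h2 : mixp D @: Q \subset P.
  apply/subsetP=> q /imsetP [[a b]]; rewrite !inE /= => /andP [aA bB] ->.
  rewrite /mixp /= andbT; apply/andP; split.
    rewrite (hA _ a) // => x xD; by rewrite /mix ffunE xD.
  rewrite (hB _ b) // => x; rewrite inE => xD; by rewrite /mix ffunE (negbTE xD).
have := subset_leq_card h1; have := subset_leq_card h2.
rewrite !card_imset // => l1 l2.
have : #|P| = #|Q| by apply/eqP; rewrite eqn_leq l1 l2.
by rewrite !cardsX cardsT.
Qed.

Lemma card_coord (x : X) (y : Y) :
  (#|[set w : Om | w x == y]| * #|Y| = #|Om|)%N.
Proof.
have eqc : forall y1 y2, (#|[set w : Om | w x == y1]| <= #|[set w : Om | w x == y2]|)%N.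
  move=> y1 y2.
  pose f (w : Om) : Om := [ffun z => if z == x then y2 else w z].
  have : {in [set w : Om | w x == y1] &, injective f}.
    move=> a b; rewrite !inE => /eqP ha /eqP hb /ffunP hab; apply/ffunP=> z.
    have := hab z; rewrite !ffunE; case: eqP => [->|//]; by rewrite ha hb.
  move/card_in_imset=> <-; apply: subset_leq_card; apply/subsetP=> w /imsetP [a _ ->].
  by rewrite inE ffunE eqxx.
have -> : #|Om| = \sum_(j : Y) #|[set w : Om | w x == j]|.
  rewrite -sum1_card (partition_big (fun w : Om => w x) predT) //=.
  apply: eq_bigr => j _; by rewrite sum1dep_card.
rewrite (eq_bigr (fun _ => #|[set w : Om | w x == y]|)) => [|j _]; last first.
  by apply/eqP; rewrite eqn_leq !eqc.
rewrite sum_nat_const mulnC; congr (_ * _); exact: eq_card.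
Qed.

Lemma card_Om_gt0 (y0 : Y) : (0 < #|Om|)%N.
Proof. apply/card_gt0P; by exists [ffun=> y0]. Qed.

Definition G (I : finType) (A : I -> {set Om}) (S : {set I}) : {set Om} :=
  [set w | [forall j in S, w \notin A j]].

Lemma card_bigcup_le (I : finType) (P : {set I}) (F : I -> {set Om}) :
  (#|\bigcup_(i in P) F i| <= \sum_(i in P) #|F i|)%N.
Proof.
apply: (big_rec2 (fun (U : {set Om}) n => #|U| <= n)%N); first by rewrite cards0.
move=> i U n _ h; rewrite cardsU; apply: leq_trans (leq_subr _ _) _.
by rewrite leq_add2l.
Qed.

Lemma lll (I : finType) (A : I -> {set Om}) (D : I -> {set X}) (d : nat) (y0 : Y) :
  (0 < d)%N ->
  (forall i, dep (A i) (D i)) ->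
  (forall i, #|[set j | (j != i) && ~~ [disjoint D i & D j]]| <= d)%N ->
  (forall i, #|A i| * (4 * d) <= #|Om|)%N ->
  exists w : Om, forall i, w \notin A i.
Proof.
move=> d0 hdep hG hP.
have Om0 := card_Om_gt0 y0.
set Gam := fun i => [set j | (j != i) && ~~ [disjoint D i & D j]].
have claim : forall n (S : {set I}) i, (#|S| < n)%N -> i \notin S ->
    (2 * d * #|A i :&: G A S| <= #|G A S|)%N.
  elim=> [//|n IH] S i hS iS.
  set S1 := S :&: Gam i; set S2 := S :\: Gam i.
  have sub1 : G A S \subset G A S2.
    apply/subsetP=> w; rewrite !inE => /forallP h; apply/forallP=> j.
    apply/implyP; rewrite !inE => /andP [_ jS]; exact: (implyP (h j) jS).
  have X1 : (#|A i :&: G A S| <= #|A i :&: G A S2|)%N.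
    by apply: subset_leq_card; apply: setIS.
  have ind : (#|A i :&: G A S2| * #|Om| = #|A i| * #|G A S2|)%N.
    apply: indep; first exact: hdep.
    move=> a b hab.
    have hj : forall j, j \in S2 -> (a \in A j) = (b \in A j).
      move=> j jS2.
      have dis : [disjoint D i & D j].
        move: jS2; rewrite /S2 /Gam !inE => /andP [hj jS]; move: hj.
        rewrite negb_and negbK; case/orP=> [/eqP eji|]; last by rewrite negbK.
        by move: iS; rewrite -eji jS.
      apply: (hdep j a b) => x xD; apply: hab; rewrite inE.
      by rewrite (disjointFl dis xD).
    rewrite !inE; apply/forallP/forallP=> h j; have := h j;
      case jS2: (j \in S2) => //=; by rewrite (hj j jS2).
  have X2 : (4 * d * #|A i :&: G A S2| <= #|G A S2|)%N.
    rewrite -(leq_pmul2r Om0) -mulnA ind mulnA [(_ * #|A i|)%N]mulnC.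
    by rewrite (mulnC #|G A S2|) leq_mul2r (hP i) orbT.
  have X3 : (#|G A S2| <= #|G A S| + \sum_(j in S1) #|A j :&: G A S2|)%N.
    rewrite -(cardsID (G A S) (G A S2)) (setIidPr sub1) leq_add2l.
    apply: leq_trans (card_bigcup_le _ _); apply: subset_leq_card.
    apply/subsetP=> w; rewrite !inE => /andP [wGS wGS2].
    move: wGS; rewrite negb_forall => /existsP [j]; rewrite negb_imply negbK => /andP [jS wAj].
    apply/bigcupP; exists j; last by rewrite !inE wAj.
    rewrite /S1 in_setI jS /=; apply/negPn/negP=> jG.
    move: wGS2 => /forallP /(_ j) /implyP.
    by rewrite /S2 in_setD jS jG wAj; move/(_ isT).
  have X4 : (2 * d * \sum_(j in S1) #|A j :&: G A S2| <= d * #|G A S2|)%N.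
    have h : forall j, j \in S1 -> (2*d*#|A j :&: G A S2| <= #|G A S2|)%N.
      move=> j jS1.
      have jG : j \in Gam i by move: jS1; rewrite in_setI => /andP [].
      apply: IH.
      - have jS : j \in S by move: jS1; rewrite in_setI => /andP [].
        apply: leq_trans _ (_ : #|S| <= n)%N; last by [].
        rewrite (cardsD1 j S) jS add1n ltnS; apply: subset_leq_card.
        apply/subsetP=> x; rewrite /S2 in_setD => /andP [xG xS]; rewrite !inE xS andbT.
        by apply/eqP=> exj; move: xG; rewrite exj jG.
      - by rewrite /S2 in_setD negb_and jG.
    rewrite big_distrr /=.
    apply: (leq_trans (@leq_sum _ _ (fun j => j \in S1) _ (fun _ => #|G A S2|) h)).
    rewrite sum_nat_const leq_mul2r; apply/orP; right.
    apply: leq_trans (hG i); apply: subset_leq_card; exact: subsetIr.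
  nia.
have pos : forall n (S : {set I}), #|S| = n -> (0 < #|G A S|)%N.
  elim=> [|n IH] S hS.
    move/eqP: hS; rewrite cards_eq0 => /eqP ->.
    apply: leq_trans Om0 _; apply: subset_leq_card; apply/subsetP=> w _.
    by rewrite inE; apply/forallP=> j; rewrite inE.
  have : (0 < #|S|)%N by rewrite hS.
  case/card_gt0P=> i iS.
  have hS' : #|S :\ i| = n by move: hS; rewrite (cardsD1 i S) iS add1n => [[]].
  have IHi := IH _ hS'.
  have iS' : i \notin S :\ i by rewrite !inE eqxx.
  have c := claim (#|S :\ i|.+1) (S :\ i) i (ltnSn _) iS'.
  have e1 : G A S = G A (S :\ i) :\: A i.
    apply/setP=> w; rewrite !inE; apply/forallP/andP.
      move=> h; split; first by have := h i; rewrite iS.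
      apply/forallP=> j; apply/implyP; rewrite !inE => /andP [_ jS].
      by have := h j; rewrite jS.
    case=> wi /forallP h j; apply/implyP=> jS; case: (eqVneq j i) => [->//|ji].
    by have := h j; rewrite !inE ji jS.
  rewrite e1; have := cardsID (A i) (G A (S :\ i)). rewrite setIC.
  move=> e2. nia.
have := pos _ setT erefl; case/card_gt0P=> w; rewrite inE => /forallP h.
exists w => i; have := h i; by rewrite inE.
Qed.

End Count.

End Part1.
Import Part1.

Module Part2.
Set Implicit Arguments. Unset Strict Implicit. Unset Printing Implicit Defensive.
Section Prob.
Variables (R : realFieldType) (X Y : finType) (y0 : Y).
Notation Om := {ffun X -> Y}.
Local Open Scope ring_scope.

Definition Pr (A : {set Om}) : R := #|A|%:R / #|Om|%:R.

Lemma Om_neq0 : (#|Om|%:R : R) != 0.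
Proof. by rewrite pnatr_eq0 -lt0n (card_Om_gt0 X y0). Qed.

Lemma Pr_indep (A B : {set Om}) (D : {set X}) : dep A D -> dep B (~: D) ->
  Pr (A :&: B) = Pr A * Pr B.
Proof.
move=> hA hB; have := indep hA hB => /(congr1 (fun n => n%:R : R)).
rewrite !natrM /Pr => h.
have h0 := Om_neq0.
have -> : (#|A :&: B|%:R : R) = #|A|%:R * #|B|%:R / #|Om|%:R.
  by rewrite -h mulfK.
by field.
Qed.

Lemma Pr_setC (A : {set Om}) : Pr (~: A) = 1 - Pr A.
Proof.
rewrite /Pr; have h0 := Om_neq0.
have e : (#|A| + #|~: A| = #|Om|)%N by rewrite cardsC.
apply: (mulIf h0); rewrite mulfVK // mulrBl mul1r mulfVK // -e natrD; ring.
Qed.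

Lemma Pr_coord (x : X) (y : Y) : Pr [set w : Om | w x == y] = (#|Y|%:R)^-1.
Proof.
have := card_coord x y => /(congr1 (fun n => n%:R : R)); rewrite natrM /Pr => <-.
have hY : (#|Y|%:R : R) != 0 by rewrite pnatr_eq0 -lt0n; apply/card_gt0P; exists y0.
rewrite invfM mulrA mulfV ?mul1r //.
rewrite pnatr_eq0 -lt0n; apply/card_gt0P; exists [ffun=> y]; by rewrite inE ffunE.
Qed.

Lemma Pr_ge0 (A : {set Om}) : 0 <= Pr A.
Proof. by rewrite /Pr divr_ge0. Qed.

Lemma Pr_le1 (A : {set Om}) : Pr A <= 1.
Proof.
rewrite /Pr ler_pdivrMr ?mul1r ?ler_nat ?max_card //.
by rewrite ltr0n (card_Om_gt0 X y0).
Qed.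

Lemma Pr_le (A B : {set Om}) : A \subset B -> Pr A <= Pr B.
Proof.
move=> sAB; rewrite /Pr ler_pM2r ?ler_nat ?subset_leq_card //.
by rewrite invr_gt0 ltr0n (card_Om_gt0 X y0).
Qed.

Lemma dep_bigcap (I : eqType) (s : seq I) (F : I -> {set Om}) (D0 : {set X}) :
  (forall t, t \in s -> dep (F t) D0) -> dep (\bigcap_(t <- s) F t) D0.
Proof.
elim: s => [|t s IH] h a b hab; first by rewrite !big_nil !inE.
rewrite !big_cons !in_setI (h t (mem_head _ _) a b hab).
by rewrite (IH _ a b hab) // => t' t's; apply: h; rewrite inE t's orbT.
Qed.

Lemma Pr_prod (I : eqType) (s : seq I) (F : I -> {set Om}) (D : I -> {set X}) :
  uniq s -> (forall t, t \in s -> dep (F t) (D t)) ->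
  (forall t t', t \in s -> t' \in s -> t != t' -> [disjoint D t & D t']) ->
  Pr (\bigcap_(t <- s) F t) = \prod_(t <- s) Pr (F t).
Proof.
elim: s => [|t s IH] us hF hD.
  rewrite !big_nil /Pr cardsT mulfV //; exact: Om_neq0.
rewrite !big_cons; move: us => /= /andP [ts us].
rewrite (@Pr_indep _ _ (D t)); first congr (_ * _).
- apply: IH => //.
  + by move=> t' t's; apply: hF; rewrite inE t's orbT.
  + by move=> t1 t2 h1 h2; apply: hD; rewrite inE ?h1 ?h2 orbT.
- by apply: hF; rewrite mem_head.
- apply: dep_bigcap => t' t's; apply: dep_sub (hF t' _); last by rewrite inE t's orbT.
  have dis : [disjoint D t & D t'].
    apply: hD; rewrite ?mem_head ?inE ?t's ?orbT //.
    by apply/eqP=> ett; move: ts; rewrite ett t's.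
  apply/subsetP=> x xD; rewrite inE; apply/negP=> xt.
  by rewrite (disjointFl dis xD) in xt.
Qed.

End Prob.

End Part2.
Import Part2.

Module Part3.
Set Implicit Arguments. Unset Strict Implicit. Unset Printing Implicit Defensive.
Lemma card_bigcup_leT (U I : finType) (P : {set I}) (F : I -> {set U}) :
  (#|\bigcup_(i in P) F i| <= \sum_(i in P) #|F i|)%N.
Proof.
apply: (big_rec2 (fun (V : {set U}) n => #|V| <= n)%N); first by rewrite cards0.
move=> i V n _ h; rewrite cardsU; apply: leq_trans (leq_subr _ _) _.
by rewrite leq_add2l.
Qed.

Lemma pairs_count (T : finType) (P : pred T) (Q : T -> pred T) :
  #|[set j : T * T | P j.1 && Q j.1 j.2]| = (\sum_(x | P x) #|[set y | Q x y]|)%N.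
Proof.
rewrite -sum1dep_card -(pair_big_dep P Q (fun _ _ => 1%N)) /=.
by apply: eq_bigr => x _; rewrite sum1dep_card.
Qed.

Lemma pairs_count2 (T : finType) (P : pred T) (Q : T -> pred T) :
  #|[set j : T * T | P j.2 && Q j.2 j.1]| = (\sum_(x | P x) #|[set y | Q x y]|)%N.
Proof.
rewrite -pairs_count.
have -> : [set j : T * T | P j.2 && Q j.2 j.1] =
          (fun j : T * T => (j.2, j.1)) @: [set j : T * T | P j.1 && Q j.1 j.2].
  apply/setP=> [[a b]]; rewrite inE /=; apply/idP/imsetP.
    by move=> h; exists (b, a); rewrite ?inE.
  by case=> [[c d]]; rewrite inE /= => h [-> ->].
by rewrite card_imset // => [[a b]] [c d] [-> ->].
Qed.

Section Graph.
Variables (T : finType) (e : rel T).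
Hypothesis esym : symmetric e.
Hypothesis eirr : irreflexive e.
Variables (Dl : nat).
Hypothesis degb : forall x, (#|[set y | e x y]| <= Dl)%N.

Definition Nb x := [set y | e x y].
Definition Wset u v := (Nb u :|: Nb v) :\ u.

Lemma card_Wset u v : e u v -> (#|Wset u v| <= Dl.*2.-1)%N.
Proof.
move=> uv.
have h1 : u \in Nb u :|: Nb v by rewrite !inE esym uv orbT.
have := cardsD1 u (Nb u :|: Nb v); rewrite h1 -/(Wset u v) => h.
have h2 : (#|Nb u :|: Nb v| <= Dl.*2)%N.
  rewrite cardsU; apply: leq_trans (leq_subr _ _) _.
  by rewrite -addnn leq_add ?degb.
lia.
Qed.

Variables (k M : nat).
Notation X := (T * 'I_k)%type.
Notation Y := 'I_M.+1.
Notation Om := {ffun X -> Y}.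

Definition cov (w : Om) (i : 'I_k) (u v : T) : bool :=
  (w (u, i) == ord0) && [forall z in Wset u v, w (z, i) != ord0].

Definition Cset i u v : {set Om} := [set w | cov w i u v].
Definition Aev u v : {set Om} := \bigcap_(i <- enum 'I_k) ~: Cset i u v.

Definition Fz (u : T) (i : 'I_k) (t : T) : {set Om} :=
  if t == u then [set w : Om | w (t, i) == ord0] else ~: [set w : Om | w (t, i) == ord0].

Lemma in_bigcap_seq (I : eqType) (s : seq I) (F : I -> {set Om}) w :
  (w \in \bigcap_(t <- s) F t) = all (fun t => w \in F t) s.
Proof. elim: s => [|t s IH]; by rewrite ?big_nil ?big_cons ?inE ?IH. Qed.

Lemma dep_setC (A : {set Om}) D : dep A D -> dep (~: A) D.
Proof. by move=> h a b hab; rewrite !inE (h a b hab). Qed.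

Lemma Cset_eq i u v : Cset i u v = \bigcap_(t <- u :: enum (Wset u v)) Fz u i t.
Proof.
apply/setP=> w; rewrite in_bigcap_seq /= inE /cov /Fz eqxx inE; congr (_ && _).
apply/forallP/allP.
  move=> h t; rewrite mem_enum => tW; have := implyP (h t) tW.
  have -> : (t == u) = false by apply/negbTE; move: tW; rewrite !inE => /andP [].
  by rewrite !inE.
move=> h t; apply/implyP=> tW; have := h t; rewrite mem_enum tW => /(_ isT).
have -> : (t == u) = false by apply/negbTE; move: tW; rewrite !inE => /andP [].
by rewrite !inE.
Qed.

Variable R : realFieldType.
Local Open Scope ring_scope.

Lemma Pr_Cset i u v :
  Pr R (Cset i u v) = (M.+1%:R)^-1 * (1 - (M.+1%:R)^-1) ^+ #|Wset u v|.
Proof.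
rewrite Cset_eq (@Pr_prod _ _ _ ord0 _ _ _ (fun t => [set (t, i)])).
- rewrite big_cons /Fz eqxx (@Pr_coord _ _ _ ord0) card_ord; congr (_ * _).
  rewrite big_enum /= -prodr_const; apply: eq_bigr => t tW.
  have -> : (t == u) = false by apply/negbTE; move: tW; rewrite !inE => /andP [].
  by rewrite (@Pr_setC _ _ _ ord0) (@Pr_coord _ _ _ ord0) card_ord.
- by rewrite /= enum_uniq mem_enum !inE eqxx.
- move=> t _ a b hab; rewrite /Fz; case: (t == u); rewrite !inE hab ?inE //.
- move=> t t' _ _ tt'; rewrite disjoints1 inE; apply/negP=> /eqP [].
  by move/eqP; rewrite (negbTE tt').
Qed.

Lemma dep_Cset i u v : e u v -> dep (Cset i u v) (setX (Nb u :|: Nb v) [set i]).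
Proof.
move=> uv a b hab; rewrite !inE /cov.
have hu : a (u, i) = b (u, i) by apply: hab; rewrite !inE /= esym uv orbT eqxx.
rewrite hu; congr (_ && _); apply: eq_forallb => z; case zW: (z \in Wset u v) => //=.
rewrite hab // !inE eqxx andbT; by move: zW; rewrite !inE => /andP [].
Qed.

Lemma Pr_Aev u v : e u v ->
  Pr R (Aev u v) = (1 - (M.+1%:R)^-1 * (1 - (M.+1%:R)^-1) ^+ #|Wset u v|) ^+ k.
Proof.
move=> uv.
rewrite /Aev (@Pr_prod _ _ _ ord0 _ _ _ (fun i => setX (Nb u :|: Nb v) [set i])).
- rewrite big_enum /= (eq_bigr (fun=> 1 - (M.+1%:R)^-1 * (1 - (M.+1%:R)^-1) ^+ #|Wset u v|)).
    by rewrite prodr_const card_ord.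
  by move=> i _; rewrite (@Pr_setC _ _ _ ord0) Pr_Cset.
- exact: enum_uniq.
- by move=> i _; apply: dep_setC; apply: dep_Cset.
- move=> i i' _ _ ii'; rewrite -setI_eq0; apply/set0Pn => [[[z j]]].
  by rewrite !inE => /andP [/andP [_ /eqP ->] /andP [_ /eqP eq]]; move: ii'; rewrite eq eqxx.
Qed.

End Graph.

End Part3.
Import Part3.

Module Part4.
Set Implicit Arguments. Unset Strict Implicit. Unset Printing Implicit Defensive.
Local Open Scope ring_scope.

Section Num.
Variable R : realType.

Lemma expR_small_le (x : R) : 0 <= x < 1 -> expR x <= (1 - x)^-1.
Proof.
move=> /andP [x0 x1].
have h := expR_ge1Dx (- x).
rewrite expRN in h.
have hp := expR_gt0 x.
rewrite -[X in X <= _]invrK lef_pV2 ?posrE ?invr_gt0 //; last lra.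
Qed.

Lemma e_le : expR (1 : R) <= 27 / 8.
Proof.
have h : expR (4^-1 : R) <= 4 / 3.
  apply: le_trans (expR_small_le _) _; first lra.
  rewrite (_ : (1 - 4^-1 : R) = 3 / 4); last by field.
  by rewrite invf_div.
have -> : (1 : R) = 4%:R * 4^-1 by rewrite mulfV.
rewrite expRM_natl.
have h4 : expR (4^-1 : R) ^+ 4 <= (4/3) ^+ 4.
  by apply: lerXn2r; rewrite ?nnegrE ?expR_ge0 //; lra.
apply: le_trans h4 _.
have -> : (4 / 3 : R) ^+ 4 = 256 / 81 by field.
lra.
Qed.

Lemma ln2_ge : (2^-1 : R) <= ln 2.
Proof.
have h : expR (2^-1 : R) <= 2.
  apply: le_trans (expR_small_le _) _; first lra.
  rewrite (_ : (1 - 2^-1 : R) = 2^-1); last by field.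
  by rewrite invrK.
rewrite -[X in X <= _](expRK) ler_ln ?posrE ?expR_gt0 //.
Qed.

Lemma ln_nat_ge (n a : nat) : (0 < a)%N -> (a <= n)%N -> ln (a%:R : R) <= ln n%:R.
Proof.
move=> a0 an; rewrite ler_ln ?posrE ?ler_nat ?ltr0n //; lia.
Qed.

Lemma ln_pow2 (j : nat) : ln ((2 ^ j)%:R : R) = j%:R * ln 2.
Proof. by rewrite natrX lnXn // mulr_natl. Qed.

Lemma greedy_num (Dl : nat) : (2 <= Dl)%N -> (Dl <= 15)%N ->
  ((Dl ^ 2).*2.+1)%:R <= 27 * Dl%:R * ln (Dl%:R : R).
Proof.
move=> h2 h15.
have l2 := ln2_ge.
have hD : (2 <= Dl%:R :> R) by rewrite (ler_nat R 2).
have hD15 : (Dl%:R <= 15 :> R) by rewrite (ler_nat R _ 15).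
rewrite -addn1 -mul2n natrD natrM natrX.
case: (ltnP Dl 4) => h4.
  have := @ln_nat_ge Dl 2 isT h2.
  move=> hl2; have hD4 : (Dl%:R <= 3 :> R) by rewrite (ler_nat R _ 3); lia.
  nra.
case: (ltnP Dl 8) => h8.
  have := @ln_nat_ge Dl (2^2) isT h4; rewrite ln_pow2 => hl.
  have hD4 : (Dl%:R <= 7 :> R) by rewrite (ler_nat R _ 7); lia.
  nra.
have := @ln_nat_ge Dl (2^3) isT h8; rewrite ln_pow2 => hl.
nra.
Qed.


Lemma lll_num (Dl k w : nat) : (16 <= Dl)%N -> (w <= Dl.*2.-1)%N ->
  27 * Dl%:R * ln (Dl%:R : R) <= k%:R ->
  (1 - (Dl.*2%:R)^-1 * (1 - (Dl.*2%:R)^-1) ^+ w) ^+ k * (16 * Dl%:R ^+ 3) <= 1 :> R.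
Proof.
move=> h16 hw hk.
set n := Dl.*2.-1.
have hn1 : (1 <= n)%N by rewrite /n; lia.
have hmn : (Dl.*2%:R : R) = n%:R + 1 by rewrite natr1 /n prednK //; lia.
set m := (Dl.*2%:R : R).
have nR : (1 <= n%:R :> R) by rewrite (ler_nat R 1).
have mR : 2 <= m by rewrite /m hmn; lra.
have DR : (16 <= Dl%:R :> R) by rewrite (ler_nat R 16).
have mD : m = 2 * Dl%:R by rewrite /m -mul2n natrM.
have e1 : 1 - m^-1 = (1 + n%:R^-1)^-1.
  rewrite /m hmn; field; apply/andP; split; apply/eqP; lra.
have en : (1 + n%:R^-1) ^+ n <= expR 1 :> R.
  have h1 : 1 + n%:R^-1 <= expR (n%:R^-1) :> R by apply: expR_ge1Dx.
  have e : (n%:R * n%:R^-1 : R) = 1 by rewrite mulfV //; apply/eqP; lra.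
  have : 0 < n%:R^-1 :> R by rewrite invr_gt0; lra.
  move=> hi; rewrite -[X in expR X]e expRM_natl; apply: lerXn2r => //.
    rewrite nnegrE; lra.
  by rewrite nnegrE expR_ge0.
have hn : expR (-1) <= (1 - m^-1) ^+ n.
  rewrite e1 exprVn expRN lef_pV2 ?posrE ?expR_gt0 ?exprn_gt0 //.
have m01 : 0 <= m^-1 <= 1.
  by apply/andP; split; [rewrite invr_ge0; lra | rewrite invf_le1; lra].
have hww : (1 - m^-1) ^+ n <= (1 - m^-1) ^+ w by apply: ler_wiXn2l => //; lra.
have eb : 8 / 27 <= expR (-1 : R).
  rewrite expRN; have := e_le; have := expR_gt0 (1 : R) => h0 h.
  rewrite -(invf_div 27 8) lef_pV2 ?posrE //; lra.
set q := m^-1 * (1 - m^-1) ^+ w.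
have hq : 4 / (27 * Dl%:R) <= q.
  rewrite /q; apply: le_trans (_ : m^-1 * (8/27) <= _).
    rewrite mD (_ : (4 / (27 * Dl%:R) : R) = (2 * Dl%:R)^-1 * (8/27)) //.
    field; apply/eqP; lra.
  apply: ler_wpM2l; first by case/andP: m01.
  exact: le_trans eb (le_trans hn hww).
have q1 : q <= 1.
  rewrite /q; have : (1 - m^-1) ^+ w <= 1 by apply: exprn_ile1; lra.
  have : 0 <= (1 - m^-1) ^+ w by apply: exprn_ge0; lra.
  nra.
have ek : (1 - q) ^+ k <= expR (- (k%:R * q)).
  rewrite (_ : - (k%:R * q) = k%:R * (- q)); last by rewrite mulrN.
  rewrite expRM_natl; apply: lerXn2r.
  - rewrite nnegrE; lra.
  - by rewrite nnegrE expR_ge0.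
  - exact: expR_ge1Dx.
have lnD : 0 <= ln (Dl%:R : R) by apply: ln_ge0; lra.
have kq : 4 * ln (Dl%:R : R) <= k%:R * q.
  apply: le_trans (_ : k%:R * (4 / (27 * Dl%:R)) <= _); last first.
    by apply: ler_wpM2l => //; rewrite ler0n.
  rewrite mulrA ler_pdivlMr; last lra.
  nra.
have e4 : expR (- (k%:R * q)) <= (Dl%:R ^+ 4)^-1.
  rewrite -(lnK (x := Dl%:R)) ?posrE; last lra.
  rewrite -expRM_natl -expRN ler_expR; lra.
apply: le_trans (_ : (Dl%:R ^+ 4)^-1 * (16 * Dl%:R ^+ 3) <= 1).
  apply: ler_wpM2r; first by apply: mulr_ge0; rewrite ?exprn_ge0; lra.
  exact: le_trans ek e4.
rewrite (_ : (Dl%:R ^+ 4)^-1 * (16 * Dl%:R ^+ 3) = 16 / (Dl%:R : R)).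
  by rewrite ler_pdivrMr; lra.
field; apply/eqP; lra.
Qed.

End Num.

End Part4.
Import Part4.

Module Part5.
Set Implicit Arguments. Unset Strict Implicit. Unset Printing Implicit Defensive.
Section Apply.
Variables (T : finType) (e : rel T).
Hypothesis esym : symmetric e.
Hypothesis eirr : irreflexive e.
Variables (Dl : nat).
Hypothesis degb : forall x, (#|[set y | e x y]| <= Dl)%N.
Variable k : nat.

Definition Dd (j : T * T) : {set T * 'I_k} :=
  if e j.1 j.2 then setX (Nb e j.1 :|: Nb e j.2) [set: 'I_k] else set0.

Lemma card_Nb x : #|Nb e x| = #|[set y | e x y]|.
Proof. by []. Qed.

Lemma card_in_nb z : (#|[set x | e x z]| <= Dl)%N.
Proof.
apply: leq_trans (degb z); apply: subset_leq_card; apply/subsetP=> x.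
by rewrite !inE esym.
Qed.

Lemma Gam_count (j0 : T * T) :
  (#|[set j | (j != j0) && ~~ [disjoint Dd j0 & Dd j]]| <= 4 * Dl ^ 3)%N.
Proof.
case: j0 => u v; rewrite /Dd /=.
case uv: (e u v); last first.
  rewrite (_ : [set j | _] = set0) ?cards0 //; apply/setP=> j.
  by rewrite !inE -setI_eq0 set0I eqxx andbF.
set Z := Nb e u :|: Nb e v.
set A := fun z => [set j : T * T | e j.1 z && e j.1 j.2].
set B := fun z => [set j : T * T | e j.2 z && e j.2 j.1].
have sub : [set j | (j != (u, v)) && ~~ [disjoint setX Z [set: 'I_k] & Dd j]]
     \subset \bigcup_(z in Z) (A z :|: B z).
  apply/subsetP=> j; rewrite inE => /andP [_]; rewrite -setI_eq0 => /set0Pn [[z t]].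
  rewrite /Dd !inE /=; case ej: (e j.1 j.2); last by rewrite inE andbF.
  rewrite !inE => /andP [/andP [zZ _] /andP [zj _]].
  apply/bigcupP; exists z; first by rewrite /Z !inE.
  rewrite !inE ej andbT; move: zj => /= /orP [->//|h]; by rewrite h (esym j.2) ej orbT.
apply: leq_trans (subset_leq_card sub) _.
apply: leq_trans (card_bigcup_leT _ _) _.
have hs : forall P : pred T, (\sum_(x | P x) #|[set y | e x y]| <= \sum_(x | P x) Dl)%N.
  by move=> P; apply: leq_sum => x _; exact: degb.
have hz : forall z, (#|A z :|: B z| <= (Dl ^ 2).*2)%N.
  move=> z; rewrite cardsU; apply: leq_trans (leq_subr _ _) _.
  rewrite -addnn leq_add //.
    rewrite /A (pairs_count (fun x => e x z) e); apply: leq_trans (hs _) _.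
    rewrite sum_nat_const expnS expn1 leq_mul2r; apply/orP; right.
    apply: leq_trans (card_in_nb z); apply: subset_leq_card; apply/subsetP=> x.
    by rewrite !inE.
  rewrite /B (pairs_count2 (fun x => e x z) e); apply: leq_trans (hs _) _.
  rewrite sum_nat_const expnS expn1 leq_mul2r; apply/orP; right.
  apply: leq_trans (card_in_nb z); apply: subset_leq_card; apply/subsetP=> x.
  by rewrite !inE.
apply: (@leq_trans (\sum_(z in Z) (Dl ^ 2).*2)).
  by apply: leq_sum => z _; exact: hz.
rewrite sum_nat_const.
have cZ : (#|Z| <= Dl.*2)%N.
  rewrite cardsU; apply: leq_trans (leq_subr _ _) _; by rewrite -addnn leq_add ?degb.
have := leq_mul cZ (leqnn (Dl ^ 2).*2).
move=> h; apply: leq_trans h _; rewrite -!mul2n; lia.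
Qed.

End Apply.

Section Apply2.
Variables (T : finType) (e : rel T).
Hypothesis esym : symmetric e.
Variables (Dl : nat).
Hypothesis degb : forall x, (#|[set y | e x y]| <= Dl)%N.
Variable k : nat.
Local Open Scope ring_scope.

Lemma exists_cover (R : realType) : (16 <= Dl)%N -> 27 * Dl%:R * ln (Dl%:R : R) <= k%:R ->
  exists w : {ffun T * 'I_k -> 'I_(Dl.*2.-1).+1}, forall u v, e u v -> exists i, cov e w i u v.
Proof.
move=> h16 hk.
set M := Dl.*2.-1.
have eM : (M.+1 = Dl.*2)%N by rewrite /M prednK //; lia.
have := @lll (T * 'I_k)%type 'I_M.+1 (T * T)%type
  (fun j => if e j.1 j.2 then Aev e k M j.1 j.2 else set0) (Dd e k) (4 * Dl ^ 3)%N ord0.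
case.
- by rewrite muln_gt0 expn_gt0; apply/andP; split => //; apply/orP; left; lia.
- move=> [u v]; rewrite /Dd /=; case uv: (e u v).
    apply: dep_bigcap => i _; apply: dep_setC.
    apply: (@dep_sub _ _ _ (setX (Nb e u :|: Nb e v) [set i])); last exact: dep_Cset.
    by apply: setXS; rewrite ?subxx ?subsetT.
  by move=> a b _; rewrite !inE.
- by move=> j; apply: (Gam_count esym degb).
- move=> [u v] /=; case uv: (e u v); last by rewrite cards0.
  have hw := card_Wset esym degb uv.
  have := @lll_num R _ _ _ h16 hw hk.
  have e2 : (M.+1%:R : R) = Dl.*2%:R by rewrite eM.
  have := Pr_Aev esym k M R uv.
  rewrite e2 => <-.
  rewrite /Pr => h.
  have Om0 := card_Om_gt0 (T * 'I_k)%type (ord0 : 'I_M.+1).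
  rewrite (_ : (4 * (4 * Dl ^ 3) = 16 * Dl ^ 3)%N); last by rewrite mulnA.
  rewrite -(ler_nat R) !natrM.
  rewrite mulrAC ler_pdivrMr ?ltr0n // mul1r in h.
  by move: h; rewrite !exprS expr0 mulr1.
move=> w hw; exists w => u v uv; have := hw (u, v); rewrite /= uv.
rewrite /Aev in_bigcap_seq => /allPn [i _]; rewrite inE negbK inE => hc; by exists i.
Qed.

End Apply2.

End Part5.
Import Part5.

Module Part6.
Set Implicit Arguments. Unset Strict Implicit. Unset Printing Implicit Defensive.
Section Color.
Variables (T : finType) (e : rel T).
Hypothesis esym : symmetric e.
Hypothesis eirr : irreflexive e.

Lemma tri_adj x y z a b : e x y -> e y z -> e x z ->
  a \in [set x; y; z] -> b \in [set x; y; z] -> a != b -> e a b.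
Proof.
move=> xy yz xz ha hb; move: ha hb; rewrite !inE.
by case/orP=> [/orP [] | ] /eqP ->; case/orP=> [/orP [] | ] /eqP ->; rewrite ?eqxx // => _;
  rewrite ?xy ?yz ?xz // ?(esym y x) ?(esym z y) ?(esym z x) ?xy ?yz ?xz.
Qed.

Lemma edge_card S : is_edge e S -> exists u v, [/\ e u v, S = [set u; v] & #|S| = 2].
Proof.
move=> /existsP [u /existsP [v /andP [uv /eqP ->]]]; exists u, v; split => //.
rewrite cards2; case: eqP => // euv; by rewrite euv eirr in uv.
Qed.

Variables (c k M : nat) (col : {ffun T -> 'I_c}).
Hypothesis colP : forall x y, e x y -> col x != col y.
Variable w : {ffun T * 'I_k -> 'I_M.+1}.
Hypothesis hcov : forall u v, e u v -> exists i, cov e w i u v.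

Definition good (S : {set T}) (p : 'I_c.-1 * 'I_k) : bool :=
  [exists u, exists v, [&& e u v, S == [set u; v], (col v == p.1.+1 :> nat) & cov e w p.2 u v]].

Lemma good_ex S : is_edge e S -> exists p, good S p.
Proof.
move=> /existsP [x /existsP [y /andP [xy /eqP ->]]].
wlog lt : x y xy / (col x < col y)%N.
  move=> H; case: (ltngtP (col x) (col y)) => h; first exact: H.
    by rewrite setUC; apply: H; rewrite // esym.
  by move: (colP xy); rewrite -(inj_eq val_inj) /= h eqxx.
have h1 : ((col y).-1 < c.-1)%N by have := ltn_ord (col y); lia.
have [i hi] := hcov xy.
exists (Ordinal h1, i); apply/existsP; exists x; apply/existsP; exists y.
rewrite xy eqxx /= hi andbT; apply/eqP; lia.
Qed.

Lemma cov_facts i u v : e u v -> cov e w i u v ->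
  [/\ w (u, i) = ord0, forall z, e v z -> z != u -> w (z, i) != ord0
    & forall z, e u z -> w (z, i) != ord0].
Proof.
move=> uv /andP [/eqP h0 /forallP h]; split => //.
  move=> z vz zu; apply: (implyP (h z)); by rewrite !inE zu /= vz orbT.
move=> z uz; apply: (implyP (h z)); rewrite !inE uz andbT.
by apply/eqP=> zu; rewrite zu eirr in uz.
Qed.

Lemma good_valid S1 S2 p : good S1 p -> good S2 p -> ~~ inj_conflict e S1 S2.
Proof.
move=> /existsP [u1 /existsP [v1 /and4P [e1 /eqP s1 /eqP c1 h1]]].
move=> /existsP [u2 /existsP [v2 /and4P [e2 /eqP s2 /eqP c2 h2]]].
have [a1 b1 d1] := cov_facts e1 h1; have [a2 b2 d2] := cov_facts e2 h2.
have cv : col v1 = col v2 by apply: val_inj; rewrite /= c1 c2.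
have nv : ~~ e v1 v2 by apply/negP=> /colP; rewrite cv eqxx.
have nu : ~~ e u1 u2 by apply/negP=> /d1; rewrite a2 eqxx.
apply/negP => /and4P [_ _ neq /orP []].
  move=> /andP [dis /existsP [a /andP [aS /existsP [b /andP [bS ab]]]]].
  have nI : forall z, z \in S1 -> z \in S2 -> False.
    move=> z zS1 zS2; have := disjoint_setI0 dis => /setP /(_ z).
    by rewrite !inE zS1 zS2.
  move: aS bS ab; rewrite s1 s2 !inE => /orP [] /eqP -> /orP [] /eqP -> ab.
  - by rewrite ab in nu.
  - have zu : u1 != u2.
      by apply/eqP=> eu; apply: (nI u1); rewrite ?s1 ?s2 !inE ?eu eqxx ?orbT.
    by move: (b2 u1); rewrite esym ab zu a1 eqxx => /(_ isT isT).
  - have zu : u2 != u1.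
      by apply/eqP=> eu; apply: (nI u1); rewrite ?s1 ?s2 !inE -?eu eqxx ?orbT.
    by move: (b1 u2); rewrite ab zu a2 eqxx => /(_ isT isT).
  - by rewrite ab in nv.
move=> /existsP [x /existsP [y /existsP [z /and5P [xy yz xz sS1 sS2]]]].
have inS : forall (S : {set T}) (a : T), S \subset [set x; y; z] -> a \in S -> a \in [set x; y; z].
  by move=> S a sS aS; move: aS; exact: (subsetP sS).
have v1t : v1 \in [set x; y; z] by apply: inS sS1 _; rewrite s1 !inE eqxx orbT.
have v2t : v2 \in [set x; y; z] by apply: inS sS2 _; rewrite s2 !inE eqxx orbT.
have u1t : u1 \in [set x; y; z] by apply: inS sS1 _; rewrite s1 !inE eqxx.
have u2t : u2 \in [set x; y; z] by apply: inS sS2 _; rewrite s2 !inE eqxx.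
have ev : v1 = v2.
  apply/eqP; apply: contraNT nv => hv; exact: tri_adj xy yz xz v1t v2t hv.
have eu : u1 = u2.
  apply/eqP; apply: contraNT nu => hu; exact: tri_adj xy yz xz u1t u2t hu.
by move: neq; rewrite s1 s2 ev eu eqxx.
Qed.

End Color.

End Part6.
Import Part6.

Module Part7.
Set Implicit Arguments. Unset Strict Implicit. Unset Printing Implicit Defensive.
Lemma greedy (V : finType) (r : rel V) N : (0 < N)%N ->
  (forall x, #|[set y | (y != x) && (r x y || r y x)]| < N)%N ->
  exists f : {ffun V -> 'I_N}, forall x y, r x y -> x != y -> f x != f y.
Proof.
move=> N0 hdeg.
suff : forall s : seq V, exists f : V -> 'I_N,
    forall x y, x \in s -> y \in s -> r x y -> x != y -> f x != f y.
  case/(_ (enum V)) => f hf; exists (finfun f) => x y xy nxy.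
  by rewrite !ffunE; apply: hf; rewrite ?mem_enum.
elim=> [|z s [f hf]].
  by exists (fun=> Ordinal N0).
set nb := [set y | (y != z) && (r z y || r y z)].
have : ~~ ([set: 'I_N] \subset f @: nb).
  apply/negP=> /subset_leq_card; rewrite cardsT card_ord.
  by move=> h; have := leq_trans h (leq_imset_card _ _); rewrite leqNgt hdeg.
case/subsetPn=> c _ cn.
exists (fun x => if x == z then c else f x) => x y; rewrite !inE.
have key : forall a, a != z -> (r z a || r a z) -> f a != c.
  move=> a az ra; apply/eqP=> fa; move: cn; rewrite -fa.
  by move/negP; apply; apply/imsetP; exists a; rewrite // inE az ra.
case: (eqVneq x z) => [->|xz]; case: (eqVneq y z) => [->|yz] //=.
- by move=> _ _ zy _; rewrite eq_sym; apply: key; rewrite // zy.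
- by move=> _ _ xy _; apply: key; rewrite // xy orbT.
- by move=> xs ys; apply: hf.
Qed.

Lemma colorable_index (T : finType) (e : rel T) (C : finType) (f : {set T} -> C) :
  (forall S1 S2, inj_conflict e S1 S2 -> f S1 != f S2) ->
  (inj_chromatic_index e <= #|C|)%N.
Proof.
move=> hf.
have hc : inj_edge_colorable e #|C|.
  apply/existsP; exists [ffun S => enum_rank (f S)].
  apply/forallP=> S1; apply/forallP=> S2; apply/implyP=> h.
  by rewrite !ffunE (inj_eq enum_rank_inj); apply: hf.
rewrite /inj_chromatic_index.
case: (ltnP #|C| (#|{set T}|.+1)) => hlt.
  rewrite leqNgt; apply/negP=> /(before_find 0%N); rewrite nth_iota // add0n hc //.
by apply: leq_trans (find_size _ _) _; rewrite size_iota.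
Qed.

Section Final.
Variables (T : finType) (e : rel T).
Hypothesis esym : symmetric e.
Hypothesis eirr : irreflexive e.
Variable Dl : nat.
Hypothesis degb : forall x, (#|[set y | e x y]| <= Dl)%N.

Lemma conflict_touch u v S2 : e u v ->
  inj_conflict e [set u; v] S2 || inj_conflict e S2 [set u; v] ->
  exists2 b, b \in S2 & b \in Nb e u :|: Nb e v.
Proof.
move=> uv.
have tri : forall S1 S2, inj_conflict e S1 S2 ->
   (exists2 a, a \in S1 & exists2 b, b \in S2 & e a b) \/
   [/\ S1 != S2, is_edge e S1, is_edge e S2 &
     exists x y z, [/\ e x y, e y z, e x z, S1 \subset [set x; y; z] & S2 \subset [set x; y; z]]].
  move=> S1 S3 /and4P [i1 i2 neq /orP []].
    move=> /andP [_ /existsP [a /andP [aS /existsP [b /andP [bS ab]]]]].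
    by left; exists a => //; exists b.
  move=> /existsP [x /existsP [y /existsP [z /and5P [xy yz xz s1 s3]]]].
  by right; split => //; exists x, y, z.
have triang : forall S3, S3 != [set u; v] -> is_edge e S3 ->
    forall x y z, e x y -> e y z -> e x z ->
    [set u; v] \subset [set x; y; z] -> S3 \subset [set x; y; z] ->
    exists2 b, b \in S3 & b \in Nb e u :|: Nb e v.
  move=> S3 neq i3 x y z xy yz xz s1 s3.
  have [x3 [y3 [e3 d3 c3]]] := edge_card eirr i3.
  have c1 : #|[set u; v]| = 2 by rewrite cards2; case: eqP => // h; rewrite h eirr in uv.
  have : ~~ (S3 \subset [set u; v]).
    apply/negP=> sub; move: neq; rewrite eqEcard sub c1 c3 leqnn; by [].
  case/subsetPn=> b bS3 bn; exists b => //.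
  have ut : u \in [set x; y; z] by move: (subsetP s1 u); rewrite !inE eqxx; apply.
  have bt : b \in [set x; y; z] by move: (subsetP s3 b); apply.
  have ub : u != b by apply/eqP=> eub; move: bn; rewrite -eub !inE eqxx.
  by rewrite /Nb !inE (tri_adj esym xy yz xz ut bt ub).
case/orP=> /tri [[a aS [b bS ab]]|[neq i1 i2 [x [y [z [xy yz xz s1 s3]]]]]].
- exists b => //; move: aS; rewrite /Nb !inE => /orP [] /eqP <-; by rewrite ab ?orbT.
- by apply: triang xy yz xz s1 s3; rewrite // eq_sym.
- exists a => //; move: bS; rewrite /Nb !inE => /orP [] /eqP <-; by rewrite (esym b a) ab ?orbT.
- by apply: triang xy yz xz s3 s1.
Qed.

End Final.

Section Final2.
Variables (T : finType) (e : rel T).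
Hypothesis esym : symmetric e.
Hypothesis eirr : irreflexive e.
Variable Dl : nat.
Hypothesis degb : forall x, (#|[set y | e x y]| <= Dl)%N.

Lemma greedy_index : (inj_chromatic_index e <= (Dl ^ 2).*2.+1)%N.
Proof.
suff hdeg : forall S1, (#|[set S2 | (S2 != S1) && (inj_conflict e S1 S2 || inj_conflict e S2 S1)]| < (Dl ^ 2).*2.+1)%N.
  have [f hf] := @greedy _ (inj_conflict e) ((Dl ^ 2).*2.+1) isT hdeg.
  rewrite -[X in (_ <= X)%N]card_ord; apply: (colorable_index (f := f)) => S1 S2 h.
  by apply: hf => //; case/and4P: h.
move=> S1; rewrite ltnS.
case i1: (is_edge e S1); last first.
  rewrite (_ : [set _ | _] = set0) ?cards0 //; apply/setP=> S2; rewrite !inE.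
  by rewrite /inj_conflict i1 /= ?andbF ?orbF.
have [u [v [uv s1 _]]] := edge_card eirr i1.
set Z := Nb e u :|: Nb e v.
have sub : [set S2 | (S2 != S1) && (inj_conflict e S1 S2 || inj_conflict e S2 S1)]
   \subset \bigcup_(z in Z) [set [set z; y] | y in Nb e z].
  apply/subsetP=> S2; rewrite inE => /andP [_ hc].
  have i2 : is_edge e S2 by case/orP: hc => /and4P [].
  have hc' : inj_conflict e [set u; v] S2 || inj_conflict e S2 [set u; v] by rewrite -s1.
  have [b bS2 bZ] := conflict_touch esym eirr uv hc'.
  have [x [y [xy s2 _]]] := edge_card eirr i2.
  apply/bigcupP; exists b => //; apply/imsetP.
  move: bS2; rewrite s2 !inE => /orP [] /eqP ->.
    by exists y; rewrite // /Nb inE.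
  exists x; first by rewrite /Nb inE esym.
  by rewrite setUC.
apply: leq_trans (subset_leq_card sub) _.
apply: leq_trans (card_bigcup_leT _ _) _.
apply: (@leq_trans (\sum_(z in Z) Dl)).
  by apply: leq_sum => z _; apply: leq_trans (leq_imset_card _ _) (degb z).
rewrite sum_nat_const.
have cZ : (#|Z| <= Dl.*2)%N.
  rewrite cardsU; apply: leq_trans (leq_subr _ _) _; by rewrite -addnn leq_add ?degb.
have := leq_mul cZ (leqnn Dl); move=> h; apply: leq_trans h _; rewrite -!mul2n; lia.
Qed.

Local Open Scope ring_scope.
Lemma main_bound (R : realType) c kk : (2 <= Dl)%N -> (2 <= c)%N -> colorable e c ->
  27 * Dl%:R * ln (Dl%:R : R) <= kk%:R :> R ->
  (inj_chromatic_index e <= c.-1 * kk)%N.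
Proof.
move=> D2 c2 hcol hk.
case: (leqP Dl 15) => hD.
  apply: leq_trans greedy_index _.
  have := greedy_num R D2 hD => hg.
  have : ((Dl ^ 2).*2.+1 <= kk)%N by rewrite -(ler_nat R); exact: le_trans hg hk.
  move=> h; apply: leq_trans h _; rewrite leq_pmull //; lia.
have [w hcov] := exists_cover esym degb hD hk.
case/existsP: hcol => col /forallP hcolP.
have colP : forall x y, e x y -> col x != col y.
  by move=> x y xy; have := hcolP x => /forallP /(_ y) /implyP; apply.
have kk0 : (0 < kk)%N.
  rewrite -(ltr_nat R); apply: lt_le_trans hk.
  have : 0 < ln (Dl%:R : R) by apply: ln_gt0; rewrite (ltr_nat R 1); lia.
  have : (0 : R) < Dl%:R by rewrite ltr0n; lia.
  move=> h1 h2; rewrite !pmulr_rgt0 //.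
have c0 : (0 < c.-1)%N by lia.
pose p0 : 'I_c.-1 * 'I_kk := (Ordinal c0, Ordinal kk0).
pose f (S : {set T}) := odflt p0 [pick p | good e col w S p].
have fg : forall S, is_edge e S -> good e col w S (f S).
  move=> S iS; rewrite /f; case: pickP => [p hp //|h0].
  by have [p hp] := good_ex esym colP hcov iS; rewrite h0 in hp.
apply: leq_trans (colorable_index (f := f) _) _; last by rewrite card_prod !card_ord.
move=> S1 S2 h.
have [i1 i2] : is_edge e S1 /\ is_edge e S2 by case/and4P: h.
apply/eqP=> eq; have g1 := fg _ i1; have g2 := fg _ i2; rewrite eq in g1.
by move: (good_valid esym eirr colP g1 g2); rewrite h.
Qed.

End Final2.

End Part7.
Import Part7.
Unset Implicit Arguments.

Lemma chrom_colorable (T : finType) (e : rel T) : irreflexive e ->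
  colorable e (chromatic_number e).
Proof.
move=> eirr.
have hT : colorable e #|T|.
  apply/existsP; exists [ffun x => enum_rank x].
  apply/forallP=> x; apply/forallP=> y; apply/implyP=> xy.
  rewrite !ffunE (inj_eq enum_rank_inj); apply/eqP=> exy.
  by rewrite exy eirr in xy.
have hh : has (colorable e) (iota 0 #|T|.+1).
  by apply/hasP; exists #|T|; rewrite // mem_iota add0n ltnSn.
have hs : (find (colorable e) (iota 0 #|T|.+1) < #|T|.+1)%N.
  by rewrite has_find size_iota in hh.
by have := nth_find 0%N hh; rewrite nth_iota ?add0n.
Qed.

Local Open Scope ring_scope.

Theorem theorem1p6 (R : realType) (T : finType) (e : rel T) :
  simple_graph e ->
  (forall (Delta chi : nat), (2 <= chi)%N -> (chi <= Delta)%N ->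
     max_degree e = Delta -> chromatic_number e = chi ->
     ((inj_chromatic_index e)%:R : R)
       <= (chi.-1)%:R * (Num.ceil ((27 : R) * Delta%:R * ln (Delta%:R : R)))%:~R)
  /\
  (forall Delta : nat, (2 <= Delta)%N -> bipartite e -> max_degree e = Delta ->
     ((inj_chromatic_index e)%:R : R)
       <= ((Num.ceil ((27 : R) * Delta%:R * ln (Delta%:R : R)))%:~R : R)).
Proof.
move=> [esym eirr].
have degb : forall x, (#|[set y | e x y]| <= max_degree e)%N.
  move=> x; rewrite /max_degree; exact: (@bigop.leq_bigmax _ (fun z => deg e z) x).
have core : forall Delta c, (2 <= Delta)%N -> max_degree e = Delta -> (2 <= c)%N ->
    colorable e c ->
    ((inj_chromatic_index e)%:R : R)
       <= (c.-1)%:R * (Num.ceil ((27 : R) * Delta%:R * ln (Delta%:R : R)))%:~R.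
  move=> Delta c D2 hmax c2 hcol.
  set x := (27 : R) * Delta%:R * ln (Delta%:R : R).
  have x0 : 0 <= x.
    rewrite /x; apply: mulr_ge0; first by apply: mulr_ge0; rewrite ?ler0n.
    by apply: ln_ge0; rewrite (ler_nat R 1); lia.
  have K0 : (0 <= Num.ceil x)%R by rewrite ceil_ge0; lra.
  have [kk hkk] : exists kk : nat, Num.ceil x = kk%:Z.
    by case: (Num.ceil x) K0 => [n _|n //]; exists n.
  have hk : x <= kk%:R by have := ceil_ge x; rewrite hkk.
  rewrite hkk -natrM ler_nat.
  rewrite -hmax in D2 hk.
  have := @main_bound T e esym eirr (max_degree e) degb R c kk D2 c2 hcol.
  by rewrite /x -hmax in hk *; move=> /(_ hk).
split.
- move=> Delta chi h2 hle hmax hchi.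
  apply: core => //; first lia.
  by rewrite -hchi; apply: chrom_colorable.
- move=> Delta h2 hb hmax.
  have := core Delta 2%N h2 hmax isT hb.
  by rewrite mul1r.
Qed.
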